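(* Let $P$ be the transition matrix of a Markov chain on a countable state space. For $\alpha\in[0,1]$ define the transition matrix $Q:=\alpha I+(1-\alpha)P$. For a state $x$ and $k\ge1$, let $p_k(x)$ and $q_k(x)$ be the return probabilities to $x$ after $k$ steps for the chains with transition matrices $P$ and $Q$ respectively, started at $x$. Then $$\sum_{k\ge1} \frac{q_k(x)}{k}=-\log(1-\alpha)+\sum_{k\ge1}\frac{p_k(x)}{k}.$$ *)

(* Defs.v *)
From HB Require Import structures.
From mathcomp Require Import all_boot all_order all_algebra.
From mathcomp Require Import all_classical all_reals all_analysis.
Set Implicit Arguments. Unset Strict Implicit. Unset Printing Implicit Defensive.
Import Order.TTheory GRing.Theory Num.Theory.
Local Open Scope classical_set_scope.
Local Open Scope ring_scope.

Definition stochastic (R : realType) (T : countType) (P : T -> T -> R) : Prop :=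
  (forall x y, 0 <= P x y) /\
  (forall x, (\esum_(y in [set: T]) (P x y)%:E = 1)%E).

Fixpoint mpow (R : realType) (T : countType) (P : T -> T -> R) (n : nat)
  : T -> T -> \bar R :=
  match n with
  | 0 => fun x y => ((x == y)%:R)%:E
  | n'.+1 => fun x y => (\esum_(z in [set: T]) (mpow P n' x z * (P z y)%:E))%E
  end.

Definition lazy_chain (R : realType) (T : countType) (alpha : R)
  (P : T -> T -> R) : T -> T -> R :=
  fun x y => alpha * (x == y)%:R + (1 - alpha) * P x y.

Definition neglog1m (R : realType) (alpha : R) : \bar R :=
  if alpha < 1 then (- ln (1 - alpha))%:E else +oo%E.

(* Main.v *)
Require Import Defs.
From HB Require Import structures.
From mathcomp Require Import all_boot all_order all_algebra.
From mathcomp Require Import all_classical all_reals all_analysis.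
From mathcomp Require Import ring lra.
Import Order.TTheory GRing.Theory Num.Theory.
Import numFieldNormedType.Exports.
Set Implicit Arguments. Unset Strict Implicit. Unset Printing Implicit Defensive.
Local Open Scope classical_set_scope.
Local Open Scope ring_scope.

Section esumZ.
Local Open Scope ereal_scope.
Lemma esumZl (R : realType) (T : choiceType) (S : set T) (a : T -> \bar R) (r : R) :
  (0 <= r)%R -> (forall i, S i -> 0 <= a i) ->
  \esum_(i in S) (r%:E * a i) = r%:E * \esum_(i in S) a i.
Proof.
move=> r0 a0; rewrite /esum.
rewrite -[in RHS]ereal_supZl//; last first.
  by apply/set0P; eexists; exists set0; [exact: fsets_set0|reflexivity].
have E A : fsets S A -> (\sum_(x \in A) (r%:E * a x) = r%:E * \sum_(x \in A) a x).
  move=> [FA AS]; rewrite !fsbig_finite//= big_seq [X in _ = _ * X]big_seq ge0_sume_distrr// => i.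
  by rewrite in_fset_set// inE => /AS; exact: a0.
congr ereal_sup; apply/seteqP; split => y /=.
  move=> [A FA <-]; exists (\sum_(x \in A) a x); first by exists A.
  by rewrite E.
move=> [z [A FA <-] <-]; exists A => //; by rewrite E.
Qed.

Lemma mpow_ge0 (R : realType) (T : countType) (Q : T -> T -> R) :
  (forall u v, (0 <= Q u v)%R) -> forall n u v, 0 <= mpow Q n u v.
Proof.
move=> Q0; elim => [|n IH] u v /=; first by rewrite lee_fin ler0n.
by apply: esum_ge0 => z _; apply: mule_ge0 => //; rewrite lee_fin.
Qed.

Lemma esum_delta (R : realType) (T : countType) (f : T -> \bar R) (y : T) :
  (forall z, 0 <= f z) ->
  \esum_(z in [set: T]) (f z * ((z == y)%:R)%:E) = f y.
Proof.
move=> f0; rewrite (esumID [set y]); last by move=> z _; rewrite mule_ge0// lee_fin ler0n.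
rewrite [X in _ + X]esum1 ?adde0; last first.
  by move=> z [_ /= /eqP/negbTE ->]; rewrite mule0.
have -> : [set: T] `&` [set y] = [set y] by apply/seteqP; split => // z [].
by rewrite esum_set1 ?eqxx ?mule1// mule_ge0// lee_fin ler0n.
Qed.

End esumZ.

Section markov.
Local Open Scope ereal_scope.
Variables (R : realType) (T : countType) (P : T -> T -> R) (a : R) (x : T).
Hypothesis P0 : forall u v, (0 <= P u v)%R.
Hypotheses (a0 : (0 <= a)%R) (a1 : (a <= 1)%R).

Let Q := lazy_chain a P.
Let b0 : (0 <= 1 - a)%R. Proof. by rewrite subr_ge0. Qed.

Lemma Q0 u v : (0 <= Q u v)%R.
Proof. by rewrite /Q /lazy_chain addr_ge0// mulr_ge0// ler0n. Qed.

Lemma lazy_step (f : T -> \bar R) y : (forall z, 0 <= f z) ->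
  \esum_(z in [set: T]) (f z * (Q z y)%:E) =
  a%:E * f y + (1 - a)%:E * \esum_(z in [set: T]) (f z * (P z y)%:E).
Proof.
move=> f0; rewrite -esumZl//; last by move=> z _; rewrite mule_ge0// lee_fin.
rewrite -(esum_delta y f0) -esumZl//; last by move=> z _; rewrite mule_ge0// lee_fin ler0n.
rewrite -esumD; last 2 first.
- by move=> z _; rewrite !mule_ge0// lee_fin ?ler0n.
- by move=> z _; rewrite !mule_ge0// lee_fin.
apply: eq_esum => z _; rewrite /Q /lazy_chain EFinD ge0_muleDr ?lee_fin ?mulr_ge0 ?ler0n//.
by rewrite !EFinM !muleA ![_ * a%:E]muleC ![_ * (1 - a)%:E]muleC.
Qed.

Definition coef k j : R := ('C(k, j)%:R * a ^+ (k - j) * (1 - a) ^+ j)%R.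

Lemma coef_ge0 k j : (0 <= coef k j)%R.
Proof. by rewrite /coef !mulr_ge0// exprn_ge0. Qed.

Lemma coefS k j : coef k.+1 j.+1 = (a * coef k j.+1 + (1 - a) * coef k j)%R.
Proof.
rewrite /coef binS natrD subSS.
have [jk|kj] := ltnP j k.
  have -> : (k - j = (k - j.+1).+1)%N by rewrite subnS prednK// subn_gt0.
  by rewrite !exprS; ring.
rewrite bin_small ?ltnS// mul0r mul0r mulr0 add0r.
by rewrite [((1 - a) ^+ j.+1)%R]exprS; ring.
Qed.

Lemma coef0 k : coef k.+1 0 = (a * coef k 0)%R.
Proof. by rewrite /coef !bin0 !subn0 exprS !expr0 !mulr1 !mul1r. Qed.

Lemma coef0n j : coef 0 j.+1 = 0%R.
Proof. by rewrite /coef bin0n /= mul0r mul0r. Qed.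

Lemma esum_lin (n : nat) (c : nat -> R) y : (forall j, (0 <= c j)%R) ->
  \esum_(z in [set: T]) ((\sum_(0 <= j < n) (c j)%:E * mpow P j x z) * (P z y)%:E) =
  \sum_(0 <= j < n) (c j)%:E * mpow P j.+1 x y.
Proof.
move=> c0.
have E z : (\sum_(0 <= j < n) (c j)%:E * mpow P j x z) * (P z y)%:E =
    \sum_(0 <= j < n) ((c j)%:E * mpow P j x z * (P z y)%:E).
  by rewrite ge0_sume_distrl // => j _; rewrite mule_ge0 ?lee_fin ?mpow_ge0.
rewrite (eq_esum (fun z _ => E z)).
rewrite esum_sum; last by move=> z j _ _; rewrite !mule_ge0 ?lee_fin ?mpow_ge0.
apply: eq_bigr => j _ /=; under eq_esum do rewrite -muleA.
by rewrite esumZl// => z _; rewrite mule_ge0 ?lee_fin ?mpow_ge0.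
Qed.

Lemma mpow_lazy k n y : (k < n)%N ->
  mpow Q k x y = \sum_(0 <= j < n) (coef k j)%:E * mpow P j x y.
Proof.
elim: k n y => [|k IH] [|n] y // kn.
  rewrite [LHS]/= big_nat_recl// big1_seq ?adde0; last first.
    by move=> j _; rewrite coef0n mul0e.
  by rewrite /coef bin0 expr0 !mulr1 mul1e.
rewrite [LHS]/= lazy_step; last by move=> z; apply: mpow_ge0; exact: Q0.
rewrite (IH n.+1) ?(ltnW kn)// (eq_esum (fun z _ => congr1 (fun t => t * _) (IH n z kn))).
rewrite esum_lin; last exact: coef_ge0.
rewrite ge0_sume_distrr; last by move=> j _; rewrite mule_ge0 ?lee_fin ?coef_ge0 ?mpow_ge0.
rewrite ge0_sume_distrr; last by move=> j _; rewrite mule_ge0 ?lee_fin ?coef_ge0 ?mpow_ge0.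

rewrite big_nat_recl// [in RHS]big_nat_recl// -addeA; congr (_ + _).
  by rewrite coef0 muleA -EFinM.
rewrite -big_split; apply: eq_bigr => j _ /=.
rewrite !muleA -!EFinM -ge0_muleDl ?lee_fin ?(mulr_ge0, coef_ge0, exprn_ge0)//.
by congr (_ * _); rewrite coefS EFinD.
Qed.
End markov.

Section series.
Local Open Scope ereal_scope.
Variable R : realType.

Lemma esum_EFin_series (f : nat -> R) (l : R) : series f @ \oo --> l ->
  \sum_(i <oo) (f i)%:E = l%:E.
Proof.
move=> fl; transitivity (limn (EFin \o series f)).
  by apply/congr_lim/funext => n /=; rewrite sumEFin.
by rewrite EFin_lim ?(cvg_lim _ fl)//; apply/cvg_ex; exists l.
Qed.

Lemma fin_series (g : nat -> \bar R) n : (forall k, 0 <= g k) ->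
  (forall k, (n <= k)%N -> g k = 0) -> \sum_(k <oo) g k = \sum_(0 <= k < n) g k.
Proof.
move=> g0 gn; rewrite (nneseries_split 0 n)// add0n [X in _ + X]eseries0 ?adde0//.
by move=> i ni _; apply: gn.
Qed.

Lemma series_from (F : nat -> \bar R) n : (forall k, 0 <= F k) ->
  \sum_(k <oo) (if (n <= k)%N then F k else 0) = \sum_(m <oo) F (m + n)%N.
Proof.
by move=> F0; rewrite nneseries_addn// [RHS]eseries_cond [RHS]eseries_mkcondr.
Qed.

Lemma nneseriesMr (f : nat -> \bar R) (P : pred nat) (y : \bar R) :
  0 <= y -> (forall k, P k -> 0 <= f k) ->
  \sum_(k <oo | P k) (f k * y) = (\sum_(k <oo | P k) f k) * y.
Proof.
move=> y0 f0; case: y y0 => [r r0|_|//].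
  rewrite lee_fin in r0; under eq_eseriesr do rewrite muleC.
  by rewrite nneseriesZl// muleC.
have [[k Pk fk]|] := pselect (exists2 k, P k & 0 < f k).
  have H1 : forall n, P n -> 0 <= f n * +oo.
    by move=> n Pn; apply: mule_ge0 => //; apply: f0.
  have H2 : f k * +oo = +oo by rewrite gt0_muley.
  rewrite (@nneseries_pinfty _ _ _ k H1 Pk H2) gt0_muley//; apply: (lt_le_trans fk).
  apply: le_trans (nneseries_lim_ge k.+1 (fun n _ Pn => f0 n Pn)).
  rewrite big_mkcond big_nat_recr//= Pk -[leLHS]add0e leeD2r//.
  by apply: sume_ge0 => i _; case: ifP => // /f0.
move=> nf; have fz : forall k, P k -> f k = 0.
  move=> k Pk; apply/eqP; rewrite eq_le f0// andbT leNgt; apply/negP => fk.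
  by apply: nf; exists k.
by rewrite !eseries0 ?mul0e// => k _ Pk; rewrite fz// mul0e.
Qed.

Lemma hockey i m : (\sum_(0 <= l < m.+1) 'C(l + i, i) = 'C(m + i.+1, i.+1))%N.
Proof.
elim: m => [|m IH]; first by rewrite big_nat1 !add0n !binn.
by rewrite big_nat_recr//= IH addSn binS addnS addnC -addnS addnC.
Qed.

Section geo.
Variable a : R.
Hypotheses (a0 : (0 <= a)%R) (a1 : (a < 1)%R).

Lemma geomE : \sum_(m <oo) (a ^+ m)%:E = ((1 - a)^-1)%:E.
Proof.
have := @cvg_geometric_series R 1 a; rewrite ger0_norm// mul1r => /(_ a1) H.
by rewrite -(esum_EFin_series H); apply: eq_eseriesr => n _; rewrite /geometric/= mul1r.
Qed.

Lemma negbinE i :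
  \sum_(m <oo) ('C(m + i, i)%:R * a ^+ m)%:E = (((1 - a)^-1) ^+ i.+1)%:E.
Proof.
elim: i => [|i IH].
  by rewrite expr1 -geomE; apply: eq_eseriesr => m _; rewrite addn0 bin0 mul1r.
set c := fun l => ('C(l + i, i)%:R * a ^+ l)%R.
have c0 l : (0 <= c l)%R by rewrite /c mulr_ge0 ?exprn_ge0.
set g := fun l m => if (l <= m)%N then (c l * a ^+ (m - l))%:E else 0.
have g0 l m : 0 <= g l m by rewrite /g; case: ifP => // _; rewrite lee_fin mulr_ge0 ?exprn_ge0.
have E m : ('C(m + i.+1, i.+1)%:R * a ^+ m)%:E = \sum_(l <oo) g l m.
  rewrite (fin_series (n:=m.+1))//; last by move=> l ml; rewrite /g leqNgt ml.
  transitivity (\sum_(0 <= l < m.+1) (c l * a ^+ (m - l))%:E); last first.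
    by apply: eq_big_nat => l /andP[_ lm]; rewrite /g -ltnS lm.
  rewrite sumEFin -hockey natr_sum mulr_suml; congr (_%:E).
  by apply: eq_big_nat => l /andP[_ lm]; rewrite /c -mulrA -exprD subnKC// -ltnS.
rewrite (eq_eseriesr (fun m _ => E m)).
transitivity (\sum_(l <oo) \sum_(m <oo) g l m).
  have := @nneseries_interchange _ (fun m l => g l m) xpredT xpredT (fun m l => g0 l m).
  exact.
have G l : \sum_(m <oo) g l m = (c l)%:E * ((1 - a)^-1)%:E.
  rewrite /g (series_from (F := fun m => (c l * a ^+ (m - l))%:E)); last first.
    by move=> m; rewrite lee_fin mulr_ge0 ?exprn_ge0.
  under eq_eseriesr do rewrite addnK EFinM.
  by rewrite nneseriesZl ?geomE// => m _; rewrite lee_fin exprn_ge0.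
rewrite (eq_eseriesr (fun l _ => G l)).
under eq_eseriesr do rewrite muleC.
rewrite nneseriesZl; last by move=> l _; rewrite lee_fin.
by rewrite /c IH -EFinM -exprS.
Qed.

Lemma L2 i : \sum_(k <oo) (if (i.+1 <= k)%N then (coef a k i.+1 / k%:R)%:E else 0) =
  (i.+1%:R^-1)%:E.
Proof.
rewrite (series_from (F := fun k => (coef a k i.+1 / k%:R)%:E)); last first.
  by move=> k; rewrite lee_fin mulr_ge0 ?invr_ge0//; apply: coef_ge0 => //; exact: ltW.
have T m : (coef a (m + i.+1) i.+1 / (m + i.+1)%:R =
    ('C(m + i, i)%:R * a ^+ m) * ((1 - a) ^+ i.+1 / i.+1%:R))%R.
  rewrite /coef addnK.
  have H := mul_bin_diag (m + i.+1) i; rewrite addnS /= in H.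
  have H' : ('C((m + i).+1, i.+1)%:R : R) = ((m + i).+1%:R * 'C(m + i, i)%:R / i.+1%:R)%R.
    by rewrite -natrM H natrM mulrAC divff ?mul1r// pnatr_eq0.
  rewrite addnS H'; field.
  by rewrite !paddr_eq0 ?oner_eq0 ?ler0n ?addr_ge0.
under eq_eseriesr do rewrite T EFinM muleC.
rewrite nneseriesZl; last by move=> m _; rewrite lee_fin mulr_ge0 ?exprn_ge0.
rewrite negbinE -EFinM; congr (_%:E).
have b0 : (1 - a != 0)%R by rewrite subr_eq0 eq_sym lt_eqF.
by rewrite mulrAC exprVn mulfV ?mul1r// expf_neq0.
Qed.
End geo.
End series.

Section logser.
Variable R : realType.
Let c : nat -> R := fun n => n%:R^-1.

Let pdc : pseries_diffs c = fun=> 1.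
Proof. by apply/funext => i; rewrite /pseries_diffs /c mulfV// pnatr_eq0. Qed.

Let pddc : pseries_diffs (pseries_diffs c) = fun i => i.+1%:R.
Proof. by apply/funext => i; rewrite pdc /pseries_diffs mulr1. Qed.

Let pgeo (K : R) : pseries (fun=> 1) K = series (geometric 1 K).
Proof. by []. Qed.

Let cvg_c (K : R) : 0 <= K -> K < 1 -> cvgn (pseries c K).
Proof.
move=> K0 K1; apply: (@series_le_cvg _ _ (geometric 1 K)).
- by move=> n; rewrite /c mulr_ge0// ?exprn_ge0// invr_ge0.
- by move=> n; rewrite /geometric/= mul1r exprn_ge0.
- move=> n; rewrite /geometric/= mul1r /c; apply: ler_piMl; rewrite ?exprn_ge0//.
  by case: n => [|n]; rewrite ?invr0// invf_le1// ler1n.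
by apply: is_cvg_geometric_series; rewrite ger0_norm.
Qed.

Let closed_form (K : R) n :
  (1 - K) ^+ 2 * series (fun i => i.+1%:R * K ^+ i) n =
  1 - n.+1%:R * K ^+ n + n%:R * K ^+ n.+1.
Proof.
elim: n => [|n IH]; first by rewrite /series/= big_geq// mulr0 expr0 mul1r mul0r addr0 subrr.
rewrite seriesSr mulrDr IH !exprS; ring.
Qed.

Let cvg_dd (K : R) : 0 <= K -> K < 1 -> cvgn (series (fun i => i.+1%:R * K ^+ i)).
Proof.
move=> K0 K1; apply: nondecreasing_is_cvgn.
  by apply: nondecreasing_series => n _ _; rewrite mulr_ge0 ?exprn_ge0.
exists ((1 - K) ^- 2) => _ [n _ <-].
have b0 : 0 < (1 - K) ^+ 2 by rewrite exprn_gt0// subr_gt0.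
rewrite -(ler_pM2l b0) mulfV ?gt_eqF// closed_form.
have : n%:R * K ^+ n.+1 <= n.+1%:R * K ^+ n.
  rewrite exprS mulrA ler_wpM2r ?exprn_ge0//.
  by rewrite (@le_trans _ _ n%:R)// ?ler_piMr ?ler_nat// ltW.
lra.
Qed.


Lemma DL (x : R) : x < 1 -> is_derive x 1 (fun y => ln (1 - y)) (- (1 - x)^-1).
Proof.
move=> x1.
pose f := fun y : R => 1 - y.
have hf : is_derive x 1 f (-1).
  by rewrite /f -[X in is_derive _ _ _ X]sub0r; apply: is_deriveB.
have hg : is_derive (f x) 1 (@ln R) (f x)^-1 by apply: is_derive1_ln; rewrite /f subr_gt0.
have dc : derivable (@ln R \o f) x 1.
  apply/derivable1_diffP; apply: differentiable_comp; apply/derivable1_diffP.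
    exact: (@ex_derive _ _ _ _ _ _ _ hf).
  exact: (@ex_derive _ _ _ _ _ _ _ hg).
apply: DeriveDef => //.
rewrite -derive1E (derive1_comp (@ex_derive _ _ _ _ _ _ _ hf) (@ex_derive _ _ _ _ _ _ _ hg)).
rewrite !derive1E !derive_val /f mulrN1//.
Qed.

Lemma DS (x : R) : `|x| < 1 ->
  is_derive x 1 (fun y => limn (pseries c y)) (1 - x)^-1.
Proof.
move=> x1; have nx := normr_ge0 x; set K := (1 + `|x|) / 2.
have K0 : 0 <= K by rewrite /K; lra.
have K1 : K < 1 by rewrite /K; lra.
have xK : `|x| < `|K| by rewrite [`|K|]ger0_norm// /K; lra.
have c1 : cvgn (pseries (pseries_diffs c) K).
  by rewrite pdc pgeo; apply: is_cvg_geometric_series; rewrite ger0_norm.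
have c2 : cvgn (pseries (pseries_diffs (pseries_diffs c)) K).
  by rewrite pddc; exact: cvg_dd.
have := pseries_snd_diffs (cvg_c K0 K1) c1 c2 xK.
move=> H; apply: is_derive_eq H _; rewrite pdc pgeo.
apply: cvg_lim => //; rewrite -[X in _ --> X]mul1r.
exact: cvg_geometric_series.
Qed.

Lemma S0 : limn (pseries c 0) = 0.
Proof.
rewrite (_ : pseries c 0 = fun=> 0) ?lim_cst//.
apply/funext => n; rewrite /pseries /series/= big1// => i _.
by case: i => [|i]; rewrite /c ?invr0 ?mul0r// expr0n mulr0.
Qed.

Lemma log_series (a : R) : 0 <= a -> a < 1 ->
  series (fun k => k%:R^-1 * a ^+ k) @ \oo --> - ln (1 - a).
Proof.
move=> a0 a1.
pose F := fun y => limn (pseries c y) + ln (1 - y).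
have DF (y : R) : -1 < y < 1 -> is_derive y 1 F 0.
  move=> /andP[y0 y1].
  rewrite -(subrr (1 - y)^-1).
  apply: is_deriveD; first by apply: DS; rewrite ltr_norml y0.
  exact: DL.
have DF' (y : R) : y \in `]0, a[ -> is_derive y 1 F ((fun=> 0) y).
  by rewrite in_itv/= => /andP[y0 ya]; apply: DF; apply/andP; split; lra.
have CF : {within `[0, a], continuous F}.
  apply: derivable_within_continuous => y; rewrite in_itv/= => /andP[y0 ya].
  have /DF H : -1 < y < 1 by apply/andP; split; lra.
  exact: (@ex_derive _ _ _ _ _ _ _ H).
have [z _] := MVT_segment a0 DF' CF.
rewrite mul0r /F S0 subr0 ln1 addr0 subr0 => /eqP; rewrite addr_eq0 => /eqP <-.
exact: cvg_c.
Qed.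
End logser.

Section main.
Local Open Scope ereal_scope.

Lemma L1 (R : realType) (a : R) : (0 <= a)%R -> (a <= 1)%R ->
  \sum_(1 <= k <oo) (a ^+ k / k%:R)%:E = neglog1m a.
Proof.
move=> a0 a1; rewrite /neglog1m; have [a_lt1|a_ge1] := ltP a 1%R.
  rewrite -(esum_EFin_series (log_series a0 a_lt1)).
  rewrite (nneseries_split 0 1); last by move=> k _; rewrite lee_fin mulr_ge0 ?invr_ge0 ?exprn_ge0.
  rewrite add0n big_nat1 invr0 mul0r add0e.
  by apply: eq_eseriesr => k _; rewrite mulrC.
have -> : a = 1%R :> R by apply/eqP; rewrite eq_le a1.
rewrite -nneseries_addn; last by move=> k; rewrite lee_fin mulr_ge0 ?invr_ge0 ?exprn_ge0.
transitivity (limn (EFin \o series (@harmonic R))).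
  apply/congr_lim/funext => n /=; rewrite sumEFin /series/=; congr (_%:E).
  by apply: eq_bigr => k _; rewrite expr1n div1r addn1.
apply: cvg_lim => //; apply/cvgeryP; apply: nondecreasing_dvgn_lt.
  by apply: nondecreasing_series => n _ _; apply: harmonic_ge0.
exact: dvg_harmonic.
Qed.

Lemma main_aux (R : realType) (T : countType) (P : T -> T -> R) (a : R) (x : T) :
  (forall u v, (0 <= P u v)%R) -> (0 <= a)%R -> (a <= 1)%R ->
  \sum_(1 <= k <oo) (mpow (lazy_chain a P) k x x * (k%:R^-1)%:E)
   = neglog1m a + \sum_(1 <= k <oo) (mpow P k x x * (k%:R^-1)%:E).
Proof.
move=> P0 a0 a1.
set p := fun j => mpow P j x x.
have p0 j : 0 <= p j by apply: mpow_ge0.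
set t := fun k j => (if (j <= k)%N then coef a k j / k%:R else 0)%:E * p j.
have t0 k j : 0 <= t k j.
  rewrite /t mule_ge0// lee_fin; case: ifP => // _.
  by rewrite mulr_ge0 ?invr_ge0// (coef_ge0 a0 a1).
have Lk k : mpow (lazy_chain a P) k x x * (k%:R^-1)%:E = \sum_(j <oo) t k j.
  rewrite (mpow_lazy x P0 a0 a1 (n:=k.+1))//.
  rewrite (fin_series (n:=k.+1))//; last by move=> j kj; rewrite /t leqNgt kj mul0e.
  rewrite ge0_sume_distrl; last by move=> j _; rewrite mule_ge0 ?lee_fin ?(coef_ge0 a0 a1) ?(mpow_ge0 P0).
  by apply: eq_big_nat => j /andP[_ jk]; rewrite /t -ltnS jk muleAC -EFinM.
rewrite (eq_eseriesr (fun k _ => Lk k)) eseries_cond.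
transitivity (\sum_(j <oo) \sum_(k <oo | true && (1 <= k)%N) t k j).
  have := @nneseries_interchange _ t (fun k => true && (1 <= k)%N) xpredT (fun k j => t0 k j).
  exact.
rewrite (nneseries_split 0 1); last by move=> j _; apply: nneseries_ge0.
rewrite add0n big_nat1.
have E0 : \sum_(k <oo | true && (0 < k)%N) t k 0%N = neglog1m a.
  rewrite -L1// [RHS]eseries_cond; apply: eq_eseriesr => k _.
  rewrite /t /p /= eqxx mule1 /coef bin0 subn0 expr0 mulr1 mul1r//.
rewrite E0.
have ninf (u : \bar R) : 0 <= u -> u != -oo by case: u.
have [a_lt1|a_ge1] := ltP a 1%R; last first.
  have -> : a = 1%R :> R by apply/eqP; rewrite eq_le a1.
  rewrite /neglog1m ltxx !addye// ninf//; apply: nneseries_ge0 => n _ _.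
    by rewrite mule_ge0// ?(mpow_ge0 P0)// lee_fin invr_ge0.
  by apply: nneseries_ge0.
congr (_ + _).
rewrite [LHS]eseries_cond [RHS]eseries_cond; apply: eq_eseriesr => j /andP[_ j1].
case: j j1 => // i _.
rewrite /t nneseriesMr//; last first.
  by move=> k _; rewrite lee_fin; case: ifP => // _; rewrite mulr_ge0 ?invr_ge0// (coef_ge0 a0 a1).
rewrite eseries_mkcondr.
rewrite (eq_eseriesr (g := fun k => if (i.+1 <= k)%N then (coef a k i.+1 / k%:R)%:E else 0)); last first.
  by move=> k _; case: k => // k; case: ifP.
by rewrite L2// muleC.
Qed.

End main.

Theorem lemma3p5 (R : realType) (T : countType) (P : T -> T -> R)
  (alpha : R) (x : T) :
  stochastic P -> 0 <= alpha <= 1 ->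
  (\sum_(1 <= k <oo) (mpow (lazy_chain alpha P) k x x * (k%:R^-1)%:E)
   = neglog1m alpha + \sum_(1 <= k <oo) (mpow P k x x * (k%:R^-1)%:E))%E.
Proof.
move=> [P0 _] /andP[a0 a1].
exact: main_aux.
Qed.
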